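(* Let $(X_k)_{k\ge1}$ be a random walk on a finite vertex set $V$ (possibly non-Markovian and non-stationary) with $X_1\sim\pi$, and assume $C(\pi,V)<\infty$. Then $S\mapsto C(\pi,S)$ (with $C(\pi,\emptyset)=0$) is nondecreasing and submodular on $2^V$: $C(\pi,S)\le C(\pi,T)$ for $S\subseteq T$, and $C(\pi,S\cup\{v\})-C(\pi,S)\ge C(\pi,T\cup\{v\})-C(\pi,T)$ for all $S\subseteq T\subseteq V$ and $v\in V\setminus T$.
   Context: A random walk on $V$ is a discrete-time random process $X_1,X_2,\dots$ with values in $V$ whose law is given by arbitrary conditional distributions $\Pr(X_k=\cdot\mid X_1,\dots,X_{k-1})$. For nonempty $S\subseteq V$, $\phi(S)=\min\{k:\ \forall s\in S\ \exists j\le k \text{ with } X_j=s\}$, and the cover time is $C(\pi,S)=\mathbf{E}[\phi(S)]$ when $X_1\sim\pi$. *)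

(* Defs.v *)
From Stdlib Require Import Reals List Bool.
Import ListNotations.
Open Scope R_scope.

(* A finite vertex set is a type V with decidable equality and a duplicate-free
   complete enumeration [elems].  Subsets of V are boolean predicates V -> bool.

   The law of a (general, non-Markovian) random walk X_1, X_2, ... is given by
   the initial distribution [pi] (law of X_1) and, for every nonempty history
   h = [x_1; ...; x_{k-1}], the conditional distribution K h = Pr(X_k = . | h). *)

Definition eqbV {V : Type} (d : forall x y : V, {x = y} + {x <> y}) (x y : V) : bool :=
  if d x y then true else false.

Definition sumV {V : Type} (elems : list V) (f : V -> R) : R :=
  fold_right Rplus 0 (map f elems).

Definition step_law {V : Type} (pi : V -> R) (K : list V -> V -> R)
  (h : list V) (x : V) : R :=
  match h with nil => pi x | _ => K h x end.

Fixpoint path_prob_aux {V : Type} (pi : V -> R) (K : list V -> V -> R)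
  (hist rest : list V) : R :=
  match rest with
  | nil => 1
  | x :: r => step_law pi K hist x * path_prob_aux pi K (hist ++ [x]) r
  end.

Definition path_prob {V : Type} (pi : V -> R) (K : list V -> V -> R) (p : list V) : R :=
  path_prob_aux pi K nil p.

Fixpoint paths {V : Type} (elems : list V) (n : nat) : list (list V) :=
  match n with
  | O => [nil]
  | S m => flat_map (fun p => map (fun x => p ++ [x]) elems) (paths elems m)
  end.

Definition covers {V : Type} (d : forall x y : V, {x = y} + {x <> y})
  (elems : list V) (p : list V) (S : V -> bool) : bool :=
  forallb (fun v => negb (S v) || existsb (fun y => eqbV d y v) p) elems.

(* phi(S) = length p : the first |p| steps cover S but the first |p|-1 do not
   (phi(S) = 0 for S empty, matching the convention C(pi, emptyset) = 0) *)
Definition first_cover {V : Type} (d : forall x y : V, {x = y} + {x <> y})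
  (elems : list V) (p : list V) (S : V -> bool) : bool :=
  covers d elems p S &&
  match p with nil => true | _ => negb (covers d elems (removelast p) S) end.

Definition prob_phi_eq {V : Type} (d : forall x y : V, {x = y} + {x <> y})
  (elems : list V) (pi : V -> R) (K : list V -> V -> R) (S : V -> bool) (k : nat) : R :=
  fold_right Rplus 0
    (map (fun p => if first_cover d elems p S then path_prob pi K p else 0)
         (paths elems k)).

(* [cover_time_is ... S c] : C(pi, S) = E[phi(S)] is finite and equal to c, i.e.
   phi(S) < oo almost surely (sum_k Pr(phi(S) = k) = 1) and
   sum_k k Pr(phi(S) = k) = c. *)
Definition cover_time_is {V : Type} (d : forall x y : V, {x = y} + {x <> y})
  (elems : list V) (pi : V -> R) (K : list V -> V -> R) (S : V -> bool) (c : R) : Prop :=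
  infinite_sum (fun k => prob_phi_eq d elems pi K S k) 1 /\
  infinite_sum (fun k => INR k * prob_phi_eq d elems pi K S k) c.

Definition subsetV {V : Type} (S T : V -> bool) : Prop :=
  forall v, S v = true -> T v = true.

Definition addV {V : Type} (d : forall x y : V, {x = y} + {x <> y})
  (S : V -> bool) (v : V) : V -> bool :=
  fun x => S x || eqbV d x v.

(* Main.v *)
Require Import Defs.
From Stdlib Require Import Reals List Bool Lra Lia.
Import ListNotations.
Open Scope R_scope.

Lemma cv_ext (u v : nat -> R) l : (forall n, u n = v n) -> Un_cv u l -> Un_cv v l.
Proof. intros H C e He. destruct (C e He) as [N HN]. exists N; intros n Hn. rewrite <- H. auto. Qed.

Lemma cv_le (u v : nat -> R) a b N0 : Un_cv u a -> Un_cv v b ->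
  (forall n, (n >= N0)%nat -> u n <= v n) -> a <= b.
Proof.
  intros Cu Cv H. destruct (Rle_or_lt a b) as [|Hlt]; auto. exfalso.
  destruct (Cu ((a-b)/2)) as [N1 H1]; [lra|].
  destruct (Cv ((a-b)/2)) as [N2 H2]; [lra|].
  set (n := (N0 + N1 + N2)%nat).
  specialize (H1 n ltac:(lia)). specialize (H2 n ltac:(lia)). specialize (H n ltac:(lia)).
  unfold Rdist in *. apply Rabs_def2 in H1. apply Rabs_def2 in H2. lra.
Qed.

Lemma cv_squeeze (u v w : nat -> R) l : Un_cv u l -> Un_cv w l ->
  (forall n, u n <= v n <= w n) -> Un_cv v l.
Proof.
  intros Cu Cw H e He. destruct (Cu e He) as [N1 H1]. destruct (Cw e He) as [N2 H2].
  exists (N1+N2)%nat. intros n Hn. specialize (H1 n ltac:(lia)). specialize (H2 n ltac:(lia)).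
  specialize (H n). unfold Rdist in *. apply Rabs_def2 in H1. apply Rabs_def2 in H2.
  apply Rabs_def1; lra.
Qed.

Fixpoint psum (f : nat -> R) (n : nat) : R :=
  match n with O => 0 | S m => psum f m + f m end.

Definition Pg (g : nat -> R) (k : nat) : R :=
  match k with O => g O | S k' => g k - g k' end.

Definition Mg (g : nat -> R) (N : nat) : R := sum_f_R0 (fun k => INR k * Pg g k) N.
Definition Tg (g : nat -> R) (N : nat) : R := psum (fun k => 1 - g k) N.

Lemma sum_Pg g N : sum_f_R0 (Pg g) N = g N.
Proof. induction N; simpl; auto. rewrite IHN. ring. Qed.

Lemma Mg_Tg g N : Mg g N = Tg g N - INR N * (1 - g N).
Proof.
  unfold Mg, Tg. induction N.
  - simpl. ring.
  - change (sum_f_R0 (fun k => INR k * Pg g k) N + INR (S N) * (g (S N) - g N) = psum (fun k => 1 - g k) N + (1 - g N) - INR (S N) * (1 - g (S N))). rewrite IHN, S_INR. ring.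
Qed.

Lemma Mg_incr g N m : (forall k, 0 <= Pg g k) -> (N <= m)%nat ->
  INR N * (g m - g N) <= Mg g m - Mg g N.
Proof.
  intros Hp Hm. induction Hm.
  - lra.
  - unfold Mg in *. simpl sum_f_R0. simpl Pg in *.
    assert (INR N <= INR (S m)) by (apply le_INR; lia).
    specialize (Hp (S m)). simpl in Hp. change (INR N * (g (S m) - g N) <= sum_f_R0 (fun k => INR k * Pg g k) m + INR (S m) * (g (S m) - g m) - sum_f_R0 (fun k => INR k * Pg g k) N). nra.
Qed.

Lemma const_cv (c : R) : Un_cv (fun _ => c) c.
Proof. intros e He; exists O; intros; unfold Rdist; rewrite Rminus_diag, Rabs_R0; auto. Qed.

Section AbsS.
Variables (gV : nat -> R) (cV : R).
Hypothesis HPV : forall k, 0 <= Pg gV k.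
Hypothesis HV1 : forall k, gV k <= 1.
Hypothesis CV1 : Un_cv gV 1.
Hypothesis CVM : Un_cv (Mg gV) cV.

Lemma tailV N : INR N * (1 - gV N) <= cV - Mg gV N.
Proof.
  apply (cv_le (fun m => INR N * (gV m - gV N)) (fun m => Mg gV m - Mg gV N) _ _ N).
  - replace (INR N * (1 - gV N)) with (INR N * (1 - gV N)) by ring.
    apply (CV_mult (fun _ => INR N) (fun m => gV m - gV N)). apply const_cv.
    apply CV_minus; auto. apply const_cv.
  - apply CV_minus; auto. apply const_cv.
  - intros m Hm. apply Mg_incr; auto.
Qed.

Variable g : nat -> R.
Hypothesis HP : forall k, 0 <= Pg g k.
Hypothesis H1 : forall k, g k <= 1.
Hypothesis HVg : forall k, gV k <= g k.

Lemma g_cv : Un_cv g 1.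
Proof. apply (cv_squeeze gV g (fun _ => 1)); auto. apply const_cv. Qed.

Lemma tail_cv : Un_cv (fun N => INR N * (1 - g N)) 0.
Proof.
  apply (cv_squeeze (fun _ => 0) _ (fun N => cV - Mg gV N)).
  - apply const_cv.
  - replace 0 with (cV - cV) by ring. apply CV_minus; auto. apply const_cv.
  - intros n. split. apply Rmult_le_pos. apply pos_INR. specialize (H1 n); lra.
    eapply Rle_trans; [|apply tailV]. apply Rmult_le_compat_l. apply pos_INR.
    specialize (HVg n); lra.
Qed.

Lemma Tg_le N : Tg g N <= Tg gV N.
Proof. unfold Tg. induction N; simpl. lra. specialize (HVg N). lra. Qed.

Lemma Mg_cv : exists c, Un_cv (Mg g) c.
Proof.
  destruct (growing_cv (Mg g)) as [c Hc].
  - intros n. unfold Mg. specialize (HP (S n)). assert (0 <= INR (S n)) by apply pos_INR.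
    change (sum_f_R0 (fun k => INR k * Pg g k) n <= sum_f_R0 (fun k => INR k * Pg g k) n + INR (S n) * Pg g (S n)).
    pose proof (Rmult_le_pos _ _ H HP). lra.
  - exists cV. intros x [i ->]. rewrite Mg_Tg.
    pose proof (Tg_le i). pose proof (tailV i). rewrite Mg_Tg in H0.
    assert (0 <= INR i * (1 - g i)). apply Rmult_le_pos. apply pos_INR. specialize (H1 i); lra.
    lra.
  - eauto.
Qed.

Lemma Tg_cv c : Un_cv (Mg g) c -> Un_cv (Tg g) c.
Proof.
  intros C. replace c with (c + 0) by ring.
  apply cv_ext with (fun N => Mg g N + INR N * (1 - g N)).
  intros; rewrite Mg_Tg; ring.
  apply CV_plus; auto. apply tail_cv.
Qed.
End AbsS.

Definition lsum {A : Type} (l : list A) (f : A -> R) : R := fold_right Rplus 0 (map f l).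

Lemma lsum_app {A} (l1 l2 : list A) f : lsum (l1 ++ l2) f = lsum l1 f + lsum l2 f.
Proof. unfold lsum. induction l1; simpl. ring. rewrite IHl1. ring. Qed.
Lemma lsum_flat_map {A B} (h : A -> list B) l f : lsum (flat_map h l) f = lsum l (fun a => lsum (h a) f).
Proof. induction l; simpl. reflexivity. rewrite lsum_app, IHl. reflexivity. Qed.
Lemma lsum_map {A B} (h : A -> B) l f : lsum (map h l) f = lsum l (fun a => f (h a)).
Proof. unfold lsum. rewrite map_map. reflexivity. Qed.
Lemma lsum_ext {A} (l : list A) f g : (forall x, f x = g x) -> lsum l f = lsum l g.
Proof. intros H. unfold lsum. induction l; simpl; auto. rewrite H, IHl. auto. Qed.
Lemma lsum_minus {A} (l : list A) f g : lsum l (fun x => f x - g x) = lsum l f - lsum l g.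
Proof. unfold lsum. induction l; simpl. ring. rewrite IHl. ring. Qed.
Lemma lsum_scal {A} (l : list A) c f : lsum l (fun x => c * f x) = c * lsum l f.
Proof. unfold lsum. induction l; simpl. ring. rewrite IHl. ring. Qed.
Lemma lsum_le {A} (l : list A) f g : (forall x, f x <= g x) -> lsum l f <= lsum l g.
Proof. intros H. unfold lsum. induction l; simpl. lra. specialize (H a). lra. Qed.
Lemma lsum_nonneg {A} (l : list A) f : (forall x, 0 <= f x) -> 0 <= lsum l f.
Proof. intros H. unfold lsum. induction l; simpl. lra. specialize (H a). lra. Qed.

Section Prob.
Variables (V : Type) (d : forall x y : V, {x = y} + {x <> y}) (elems : list V)
  (pi : V -> R) (K : list V -> V -> R).
Hypothesis Hpi_nonneg : forall x, 0 <= pi x.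
Hypothesis Hpi_sum : sumV elems pi = 1.
Hypothesis HK_nonneg : forall h x, 0 <= K h x.
Hypothesis HK_sum : forall h, h <> nil -> sumV elems (K h) = 1.

Lemma pp_app hist p x : path_prob_aux pi K hist (p ++ [x]) =
  path_prob_aux pi K hist p * step_law pi K (hist ++ p) x.
Proof.
  revert hist. induction p; intros hist; simpl.
  - rewrite app_nil_r. ring.
  - rewrite IHp, <- app_assoc. simpl. ring.
Qed.

Lemma step_nonneg h x : 0 <= step_law pi K h x.
Proof. destruct h; simpl; auto. Qed.

Lemma pp_nonneg hist p : 0 <= path_prob_aux pi K hist p.
Proof.
  revert hist; induction p; intros; simpl. lra.
  apply Rmult_le_pos. apply step_nonneg. auto.
Qed.

Lemma step_sum h : lsum elems (step_law pi K h) = 1.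
Proof. destruct h; simpl. apply Hpi_sum. apply HK_sum. discriminate. Qed.

Definition E k (f : list V -> R) := lsum (paths elems k) (fun p => f p * path_prob pi K p).

Lemma E_S k f : E (S k) f = lsum (paths elems k)
  (fun q => path_prob pi K q * lsum elems (fun x => f (q ++ [x]) * step_law pi K q x)).
Proof.
  unfold E. simpl paths. rewrite lsum_flat_map. apply lsum_ext. intro q.
  rewrite lsum_map, <- lsum_scal. apply lsum_ext. intro x. unfold path_prob.
  rewrite pp_app. simpl (nil ++ q). ring.
Qed.

Lemma E_pref k g : E (S k) (fun p => g (removelast p)) = E k g.
Proof.
  rewrite E_S. unfold E. apply lsum_ext. intro q.
  rewrite (lsum_ext _ _ (fun x => g q * step_law pi K q x)).
  rewrite lsum_scal, step_sum. ring.
  intros x. rewrite removelast_last. auto.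
Qed.

Lemma E_le k f g : (forall p, f p <= g p) -> E k f <= E k g.
Proof. intros H. apply lsum_le. intros p. apply Rmult_le_compat_r. apply pp_nonneg. auto. Qed.

Lemma E_one k : E k (fun _ => 1) = 1.
Proof.
  induction k. unfold E, lsum, path_prob; simpl. ring.
  rewrite (E_pref k (fun _ => 1)). exact IHk.
Qed.

Definition cov (A : V -> bool) (p : list V) : R := if covers d elems p A then 1 else 0.
Definition G A k := E k (cov A).

Lemma covers_app q r A : covers d elems q A = true -> covers d elems (q ++ r) A = true.
Proof.
  unfold covers. intros H. apply forallb_forall. intros v Hv.
  rewrite forallb_forall in H. specialize (H v Hv).
  rewrite existsb_app. apply orb_true_iff in H. apply orb_true_iff. destruct H; auto.
  right. rewrite H. auto.
Qed.

Lemma covers_gen p A B C : covers d elems p A = true -> covers d elems p B = true ->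
  (forall u, C u = true -> A u = true \/ B u = true) -> covers d elems p C = true.
Proof.
  unfold covers. intros HA HB H. rewrite forallb_forall in *. intros v Hv.
  specialize (HA v Hv). specialize (HB v Hv). destruct (C v) eqn:E; auto.
  destruct (H v E) as [E'|E']; rewrite E' in *; auto.
Qed.

Lemma cov_sub A B p : subsetV A B -> cov B p <= cov A p.
Proof.
  intros H. unfold cov. destruct (covers d elems p B) eqn:E.
  - rewrite (covers_gen p B B A E E). lra. intros u Hu. auto.
  - destruct (covers d elems p A); lra.
Qed.

Lemma cov_01 A p : 0 <= cov A p <= 1.
Proof. unfold cov; destruct covers; lra. Qed.

Lemma fc_app q x A : first_cover d elems (q ++ [x]) A =
  covers d elems (q ++ [x]) A && negb (covers d elems q A).
Proof.
  unfold first_cover. destruct (q ++ [x]) eqn:E.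
  - exfalso. eapply app_cons_not_nil. symmetry. eauto.
  - rewrite <- E, removelast_last. auto.
Qed.

Lemma phi_Pg A k : prob_phi_eq d elems pi K A k = Pg (G A) k.
Proof.
  destruct k.
  - unfold prob_phi_eq, Pg, G, E, cov, first_cover, lsum, path_prob. simpl. destruct covers; simpl; ring.
  - unfold prob_phi_eq. simpl Pg.
    change (lsum (paths elems (S k)) (fun p => if first_cover d elems p A then path_prob pi K p else 0) = G A (S k) - G A k).
    transitivity (E (S k) (fun p => if first_cover d elems p A then 1 else 0)).
    { apply lsum_ext. intros p. destruct first_cover; ring. }
    unfold G. rewrite <- (E_pref k (cov A)). rewrite E_S, E_S, E_S. rewrite <- lsum_minus.
    apply lsum_ext. intro q. rewrite <- Rmult_minus_distr_l.
    f_equal. rewrite <- lsum_minus. apply lsum_ext. intro x.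
    rewrite fc_app, removelast_last. unfold cov.
    destruct (covers d elems q A) eqn:E1.
    + rewrite (covers_app _ _ _ E1). simpl. ring.
    + destruct (covers d elems (q ++ [x]) A); simpl; ring.
Qed.

End Prob.

Notation GP := G.

Lemma sum_ext (f g : nat -> R) n : (forall k, f k = g k) -> sum_f_R0 f n = sum_f_R0 g n.
Proof. intros H. induction n; simpl; rewrite H; auto. rewrite IHn; auto. Qed.

Theorem proposition7 (V : Type) (d : forall x y : V, {x = y} + {x <> y})
  (elems : list V) (Hnodup : NoDup elems) (Hcomplete : forall v : V, In v elems)
  (pi : V -> R) (K : list V -> V -> R)
  (Hpi_nonneg : forall x, 0 <= pi x) (Hpi_sum : sumV elems pi = 1)
  (HK_nonneg : forall h x, 0 <= K h x) (HK_sum : forall h, h <> nil -> sumV elems (K h) = 1)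
  (Hfin : exists cV, cover_time_is d elems pi K (fun _ => true) cV) :
  (forall S : V -> bool, exists c, cover_time_is d elems pi K S c)
  /\ (forall (S T : V -> bool) (cS cT : R), subsetV S T ->
        cover_time_is d elems pi K S cS -> cover_time_is d elems pi K T cT -> cS <= cT)
  /\ (forall (S T : V -> bool) (v : V) (cS cT cSv cTv : R),
        subsetV S T -> T v = false ->
        cover_time_is d elems pi K S cS -> cover_time_is d elems pi K T cT ->
        cover_time_is d elems pi K (addV d S v) cSv ->
        cover_time_is d elems pi K (addV d T v) cTv ->
        cSv - cS >= cTv - cT).
Proof.
  set (G := fun A => G V d elems pi K A).
  assert (HP : forall A k, 0 <= Pg (G A) k).
  { intros A k. unfold G. rewrite <- phi_Pg by auto. apply lsum_nonneg. intros p.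
    destruct first_cover. apply pp_nonneg; auto. lra. }
  assert (H1 : forall A k, G A k <= 1).
  { intros A k. unfold G, GP. rewrite <- (E_one V elems pi K Hpi_sum HK_sum k).
    apply E_le; auto. intros p. apply cov_01. }
  assert (Hsub : forall A B k, subsetV A B -> G B k <= G A k).
  { intros A B k H. apply E_le; auto. intros p. apply cov_sub. auto. }
  assert (Hall : forall A k, G (fun _ => true) k <= G A k).
  { intros A k. apply Hsub. intros v _. auto. }
  assert (Hct : forall A c, cover_time_is d elems pi K A c <-> Un_cv (G A) 1 /\ Un_cv (Mg (G A)) c).
  { intros A c. unfold cover_time_is. split; intros [Ha Hb]; split.
    - eapply cv_ext; [|exact Ha]. intros n. rewrite <- (sum_Pg (G A)). apply sum_ext.
      intros k. unfold G. apply phi_Pg; auto.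
    - eapply cv_ext; [|exact Hb]. intros n. apply sum_ext. intros k. unfold G. rewrite phi_Pg; auto.
    - eapply cv_ext; [|exact Ha]. intros n. rewrite <- (sum_Pg (G A)). apply sum_ext.
      intros k. unfold G. symmetry. apply phi_Pg; auto.
    - eapply cv_ext; [|exact Hb]. intros n. apply sum_ext. intros k. unfold G. rewrite phi_Pg; auto. }
  destruct Hfin as [cV HcV]. apply Hct in HcV. destruct HcV as [CV1 CVM].
  assert (HT : forall A c, cover_time_is d elems pi K A c -> Un_cv (Tg (G A)) c).
  { intros A c Hc. apply Hct in Hc. destruct Hc as [_ Hc].
    eapply Tg_cv; eauto. }
  split; [|split].
  - intros S. destruct (Mg_cv _ _ (HP _) CV1 CVM (G S) (HP S) (H1 S) (Hall S)) as [c Hc].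
    exists c. apply Hct. split; auto. eapply g_cv; eauto.
  - intros S T cS cT HST HS HTc. apply HT in HS. apply HT in HTc.
    apply (cv_le _ _ _ _ O HS HTc). intros n _. unfold Tg. induction n; simpl. lra.
    pose proof (Hsub S T n HST). lra.
  - intros S T v cS cT cSv cTv HST HTv HS HTc HSv HTv'.
    apply HT in HS, HTc, HSv, HTv'.
    apply Rle_ge. apply (cv_le _ _ _ _ O (CV_minus _ _ _ _ HTv' HTc) (CV_minus _ _ _ _ HSv HS)).
    intros n _. unfold Tg. induction n; simpl. lra.
    enough (G T n - G (addV d T v) n <= G S n - G (addV d S v) n) by lra.
    unfold G, GP, E. rewrite <- !lsum_minus. apply lsum_le. intros p.
    rewrite <- !Rmult_minus_distr_r. apply Rmult_le_compat_r. apply pp_nonneg; auto.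
    assert (F1 : covers d elems p T = true -> covers d elems p S = true).
    { intros ET. apply (covers_gen V d elems p T T S ET ET). auto. }
    assert (F2 : covers d elems p (addV d S v) = true -> covers d elems p S = true).
    { intros ESv. apply (covers_gen V d elems p _ _ S ESv ESv).
      intros u Hu. left. unfold addV. rewrite Hu. auto. }
    assert (F3 : covers d elems p T = true -> covers d elems p (addV d S v) = true ->
                 covers d elems p (addV d T v) = true).
    { intros ET ESv. apply (covers_gen V d elems p T (addV d S v) (addV d T v) ET ESv).
      intros u. unfold addV. intros Hu. apply orb_true_iff in Hu. destruct Hu as [Hu|Hu]; auto.
      right. rewrite Hu. apply orb_true_r. }
    unfold cov.
    destruct (covers d elems p S), (covers d elems p T),
      (covers d elems p (addV d S v)), (covers d elems p (addV d T v)); try lra;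
      exfalso; intuition congruence.
Qed.
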